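(* Let $k:(0,\infty)\to(0,\infty)$ be $C^1$, $K(X):=k(|X|)|X|^{-1}X$ for $X\in\mathbb{R}^N\setminus\{0\}$, $b(t):=k'(t)t/k(t)$, and let $X:\Omega\to\mathbb{R}^N\setminus\{0\}$ be $C^1$ on an open $\Omega\subset\mathbb{R}^n$. Let $A$ be a real $N\times N$ matrix and $0<\lambda\le\Lambda$ such that $\langle A\chi,\chi\rangle\ge\lambda|\chi|^2$ and $|A\chi|\le\Lambda|\chi|$ for all $\chi\in\mathbb{R}^{N\times n}$. Put $\kappa=\lambda/\Lambda^2$, $\nu=\lambda/\Lambda$. At every point where $b:=b(|X|)>0$, $$\langle\kappa A\,DX,D(K(X))\rangle\ge\big(\alpha^{1/2}-(1-\nu^2)^{1/2}\big)|DX||D(K(X))|,\qquad\alpha=1-\Big(\frac{b-1}{b+1}\Big)^2 .$$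
   Context: $DX$ denotes the $N\times n$ Jacobian matrix of $X$; for $\chi\in\mathbb{R}^{N\times n}$, $A\chi$ is the matrix product; for $N\times n$ matrices $P,Q$, $\langle P,Q\rangle=\sum_{a,j}P_{aj}Q_{aj}$ and $|P|=\langle P,P\rangle^{1/2}$. *)

(* Defs.v *)
From mathcomp Require Import ssreflect ssrfun ssrbool eqtype ssrnat seq fintype.
From Stdlib Require Import Reals.
Set Implicit Arguments.
Unset Strict Implicit.

Open Scope R_scope.

Definition vec (n : nat) := 'I_n -> R.
Definition mat (N n : nat) := 'I_N -> 'I_n -> R.

Definition fsum (n : nat) (f : 'I_n -> R) : R := foldr Rplus 0 (map f (enum 'I_n)).

Definition vzero (n : nat) : vec n := fun _ => 0.
Definition vsub (n : nat) (x y : vec n) : vec n := fun i => x i - y i.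
Definition vnorm (n : nat) (v : vec n) : R := sqrt (fsum (fun i => v i * v i)).

Definition frob (N n : nat) (P Q : mat N n) : R :=
  fsum (fun a => fsum (fun j => P a j * Q a j)).
Definition mnorm (N n : nat) (P : mat N n) : R := sqrt (frob P P).

Definition mulA (N n : nat) (A : mat N N) (P : mat N n) : mat N n :=
  fun a j => fsum (fun c => A a c * P c j).
Definition mscale (N n : nat) (s : R) (P : mat N n) : mat N n :=
  fun a j => s * P a j.

Definition Kmap (N : nat) (k : R -> R) (p : vec N) : vec N :=
  fun a => k (vnorm p) * / vnorm p * p a.

Definition bfun (k k' : R -> R) (t : R) : R := k' t * t / k t.

Definition shift (n : nat) (x : vec n) (j : 'I_n) (t : R) : vec n :=
  fun i => x i + (if i == j then t else 0).

Definition has_partial (n : nat) (f : vec n -> R) (x : vec n) (j : 'I_n) (l : R) : Prop :=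
  derivable_pt_lim (fun t => f (shift x j t)) 0 l.

Definition is_jacobian (N n : nat) (F : vec n -> vec N) (x : vec n) (J : mat N n) : Prop :=
  forall (a : 'I_N) (j : 'I_n), has_partial (fun y => F y a) x j (J a j).

Definition cont_at (n : nat) (f : vec n -> R) (x : vec n) : Prop :=
  forall eps, 0 < eps -> exists delta, 0 < delta /\
    forall y, vnorm (vsub y x) < delta -> Rabs (f y - f x) < eps.

Definition is_open (n : nat) (O : vec n -> Prop) : Prop :=
  forall x, O x -> exists r, 0 < r /\ forall y, vnorm (vsub y x) < r -> O y.

Definition C1_on (N n : nat) (O : vec n -> Prop) (F : vec n -> vec N) : Prop :=
  exists DF : vec n -> mat N n,
    forall x, O x -> is_jacobian F x (DF x) /\
      forall (a : 'I_N) (j : 'I_n), cont_at (fun y => DF y a j) x.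

(* Main.v *)
Require Import Defs.
From mathcomp Require Import ssreflect ssrfun ssrbool eqtype ssrnat seq fintype.
From Stdlib Require Import Reals Lra Psatz FunctionalExtensionality.
Open Scope R_scope.
Set Implicit Arguments.
Unset Strict Implicit.

Definition lsum {T : Type} (l : seq T) (f : T -> R) := foldr Rplus 0 (map f l).

Lemma lsum_add {T : Type} (l : seq T) f g :
  lsum l (fun i => f i + g i) = lsum l f + lsum l g.
Proof. rewrite /lsum; elim: l => [|a l IH] /=; [ring | rewrite IH; ring]. Qed.

Lemma lsum_scal {T : Type} (l : seq T) c f :
  lsum l (fun i => c * f i) = c * lsum l f.
Proof. rewrite /lsum; elim: l => [|a l IH] /=; [ring | rewrite IH; ring]. Qed.

Lemma lsum_ext {T : Type} (l : seq T) f g :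
  (forall i, f i = g i) -> lsum l f = lsum l g.
Proof. move=> H; rewrite /lsum; elim: l => [|a l IH] //=; by rewrite IH H. Qed.

Lemma lsum_nonneg {T : Type} (l : seq T) f :
  (forall i, 0 <= f i) -> 0 <= lsum l f.
Proof. move=> H; rewrite /lsum; elim: l => [|a l IH] /=; [lra | have := H a; lra]. Qed.

Lemma lsum_zero {T : Type} (l : seq T) : lsum l (fun _ => 0) = 0.
Proof. rewrite /lsum; elim: l => [|a l IH] //=; rewrite IH; ring. Qed.

Lemma lsum_swap {T U : Type} (l1 : seq T) (l2 : seq U) (F : T -> U -> R) :
  lsum l1 (fun a => lsum l2 (fun j => F a j)) = lsum l2 (fun j => lsum l1 (fun a => F a j)).
Proof.
  elim: l1 => [|a l IH]; first by rewrite lsum_zero.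
  rewrite [LHS]/lsum /= -/(lsum l _) IH /lsum -lsum_add //.
Qed.

Lemma lsum_deriv {T : Type} (l : seq T) (F : T -> R -> R) (F' : T -> R) :
  (forall c, derivable_pt_lim (F c) 0 (F' c)) ->
  derivable_pt_lim (fun t => lsum l (fun c => F c t)) 0 (lsum l F').
Proof.
  move=> H; rewrite /lsum; elim: l => [|a l IH] /=.
  - exact: derivable_pt_lim_const.
  - exact: (derivable_pt_lim_plus _ _ _ _ _ (H a) IH).
Qed.

Definition madd (N n : nat) (P Q : mat N n) : mat N n := fun a j => P a j + Q a j.

Lemma frob_ext (N n : nat) (P P' Q Q' : mat N n) :
  (forall a j, P a j = P' a j) -> (forall a j, Q a j = Q' a j) -> frob P Q = frob P' Q'.
Proof.
  move=> H1 H2; apply: lsum_ext => a; apply: lsum_ext => j; by rewrite H1 H2.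
Qed.

Lemma frob_addl (N n : nat) (P1 P2 Q : mat N n) :
  frob (madd P1 P2) Q = frob P1 Q + frob P2 Q.
Proof.
  rewrite /frob -[RHS]lsum_add; apply: lsum_ext => a.
  rewrite -lsum_add; apply: lsum_ext => j; rewrite /madd; ring.
Qed.

Lemma frob_addr (N n : nat) (P Q1 Q2 : mat N n) :
  frob P (madd Q1 Q2) = frob P Q1 + frob P Q2.
Proof.
  rewrite /frob -[RHS]lsum_add; apply: lsum_ext => a.
  rewrite -lsum_add; apply: lsum_ext => j; rewrite /madd; ring.
Qed.

Lemma frob_scall (N n : nat) s (P Q : mat N n) :
  frob (mscale s P) Q = s * frob P Q.
Proof.
  rewrite /frob -[RHS]lsum_scal; apply: lsum_ext => a.
  rewrite -lsum_scal; apply: lsum_ext => j; rewrite /mscale; ring.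
Qed.

Lemma frob_scalr (N n : nat) s (P Q : mat N n) :
  frob P (mscale s Q) = s * frob P Q.
Proof.
  rewrite /frob -[RHS]lsum_scal; apply: lsum_ext => a.
  rewrite -lsum_scal; apply: lsum_ext => j; rewrite /mscale; ring.
Qed.

Lemma frob_sym (N n : nat) (P Q : mat N n) : frob P Q = frob Q P.
Proof. apply: lsum_ext => a; apply: lsum_ext => j; ring. Qed.

Lemma frob_nonneg (N n : nat) (P : mat N n) : 0 <= frob P P.
Proof.
  apply: lsum_nonneg => a; apply: lsum_nonneg => j; nra.
Qed.

Lemma mnorm_sq (N n : nat) (P : mat N n) : mnorm P ^ 2 = frob P P.
Proof. rewrite /mnorm pow2_sqrt //; exact: frob_nonneg. Qed.

Lemma mnorm_nonneg (N n : nat) (P : mat N n) : 0 <= mnorm P.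
Proof. exact: sqrt_pos. Qed.

Lemma frob_cs (N n : nat) (R Q : mat N n) : - frob R Q <= mnorm R * mnorm Q.
Proof.
  set a := frob R R; set c := frob Q Q; set be := frob R Q.
  have Ht : forall t, 0 <= t * t * a + 2 * t * be + c.
  { move=> t.
    have := frob_nonneg (madd (mscale t R) Q).
    rewrite frob_addl !frob_addr !frob_scall !frob_scalr (frob_sym Q R).
    rewrite /a /c /be; lra. }
  have Ha : 0 <= a by exact: frob_nonneg.
  have Hc : 0 <= c by exact: frob_nonneg.
  have Hsq : be * be <= a * c.
  { case: (Rle_lt_or_eq_dec 0 a Ha) => Ha'.
    - have := Ht (- be / a).
      have -> : - be / a * (- be / a) * a + 2 * (- be / a) * be + c = c - be * be / a
        by field; lra.
      move=> H.
      have : be * be / a <= c by lra.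
      move=> H2.
      have : be * be / a * a <= c * a by apply: Rmult_le_compat_r; lra.
      have -> : be * be / a * a = be * be by field; lra.
      lra.
    - case: (Req_dec be 0) => Hbe; first by rewrite Hbe; nra.
      have := Ht (- (c + 1) / (2 * be)).
      rewrite -Ha'.
      have -> : - (c + 1) / (2 * be) * (- (c + 1) / (2 * be)) * 0 +
        2 * (- (c + 1) / (2 * be)) * be + c = -1 by field.
      lra. }
  case: (Rle_or_lt (- be) 0) => Hb.
  - have := mnorm_nonneg R; have := mnorm_nonneg Q; nra.
  - rewrite /mnorm -/a -/c -sqrt_mult_alt //.
    have -> : - be = sqrt ((- be) * (- be)) by rewrite sqrt_square; lra.
    apply: sqrt_le_1_alt; lra.
Qed.

Lemma fsum_swap (N n : nat) (F : 'I_N -> 'I_n -> R) :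
  fsum (fun a => fsum (fun j => F a j)) = fsum (fun j => fsum (fun a => F a j)).
Proof. exact: lsum_swap. Qed.
Lemma fsum_scal (n : nat) c (f : 'I_n -> R) : fsum (fun i => c * f i) = c * fsum f.
Proof. exact: lsum_scal. Qed.
Lemma fsum_ext (n : nat) (f g : 'I_n -> R) : (forall i, f i = g i) -> fsum f = fsum g.
Proof. exact: lsum_ext. Qed.

Lemma chain1 (k k' sg pa : R -> R) (sg' pa' : R) :
 derivable_pt_lim sg 0 sg' -> derivable_pt_lim pa 0 pa' -> 0 < sg 0 ->
 derivable_pt_lim k (sqrt (sg 0)) (k' (sqrt (sg 0))) ->
 derivable_pt_lim (fun t => k (sqrt (sg t)) * / sqrt (sg t) * pa t) 0
  (((k' (sqrt (sg 0)) * (/ (2 * sqrt (sg 0)) * sg')) * sqrt (sg 0)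
     - (/ (2 * sqrt (sg 0)) * sg') * k (sqrt (sg 0))) / Rsqr (sqrt (sg 0)) * pa 0
   + k (sqrt (sg 0)) / sqrt (sg 0) * pa').
Proof.
  move=> Hs Hp Hpos Hk.
  have Hr : derivable_pt_lim (comp sqrt sg) 0 (/ (2 * sqrt (sg 0)) * sg') :=
    derivable_pt_lim_comp _ _ _ _ _ Hs (derivable_pt_lim_sqrt _ Hpos).
  have Hkr : derivable_pt_lim (comp k (comp sqrt sg)) 0
     (k' (sqrt (sg 0)) * (/ (2 * sqrt (sg 0)) * sg')) :=
    derivable_pt_lim_comp _ _ _ _ _ Hr Hk.
  have Hne : comp sqrt sg 0 <> 0.
  { rewrite /comp; apply: Rgt_not_eq; exact: sqrt_lt_R0. }
  have Hd := derivable_pt_lim_div _ _ _ _ _ Hkr Hr Hne.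
  have Hm := derivable_pt_lim_mult _ _ _ _ _ Hd Hp.
  exact Hm.
Qed.

Lemma key (N n : nat) (A : mat N N) (P : mat N n) (p : vec N) (lam Lam b : R) :
  0 < lam -> lam <= Lam ->
  (forall chi : mat N n, frob (mulA A chi) chi >= lam * (mnorm chi) ^ 2) ->
  (forall chi : mat N n, mnorm (mulA A chi) <= Lam * mnorm chi) ->
  0 < b -> 0 < fsum (fun c => p c * p c) ->
  frob (mscale (lam / Lam ^ 2) (mulA A P))
    (fun a j => P a j + (b - 1) / fsum (fun c => p c * p c) * p a *
                        fsum (fun c => p c * P c j)) >=
  (sqrt (1 - ((b - 1) / (b + 1)) ^ 2) - sqrt (1 - (lam / Lam) ^ 2)) * mnorm P *
  mnorm (fun a j => P a j + (b - 1) / fsum (fun c => p c * p c) * p a *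
                        fsum (fun c => p c * P c j)).
Proof.
  move=> Hlam Hle HA1 HA2 Hb Hs0.
  set s0 := fsum (fun c => p c * p c) in Hs0 *.
  set m := fun j => fsum (fun c => p c * P c j).
  set be := (b - 1) / s0.
  set W : mat N n := fun a j => p a * m j.
  set Q : mat N n := fun a j => P a j + be * p a * m j.
  have EQ : forall a j, Q a j = madd P (mscale be W) a j.
  { move=> a j; rewrite /Q /madd /mscale /W; ring. }
  set T := frob P P.
  set M := fsum (fun j => m j * m j).
  have HPW : frob P W = M.
  { rewrite /frob /W /M fsum_swap; apply: fsum_ext => j.
    have -> : fsum (fun a => P a j * (p a * m j)) =
              fsum (fun a => m j * (p a * P a j)).
    { apply: fsum_ext => a; ring. }
    by rewrite fsum_scal. }
  have HWW : frob W W = s0 * M.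
  { rewrite /frob /W /M.
    have -> : fsum (fun a => fsum (fun j => p a * m j * (p a * m j))) =
              fsum (fun a => M * (p a * p a)).
    { apply: fsum_ext => a.
      have -> : fsum (fun j => p a * m j * (p a * m j)) =
                fsum (fun j => (p a * p a) * (m j * m j)).
      { apply: fsum_ext => j; ring. }
      rewrite fsum_scal /M; ring. }
    rewrite fsum_scal -/s0 /M; ring. }
  have HM : 0 <= M by apply: lsum_nonneg => j; nra.
  have HT : 0 <= T by exact: frob_nonneg.
  have HZ : 0 <= T - M / s0.
  { have := frob_nonneg (madd P (mscale (- / s0) W)).
    rewrite frob_addl !frob_addr !frob_scall !frob_scalr (frob_sym W P) HPW HWW -/T.
    have -> : T + - / s0 * M + (- / s0 * M + - / s0 * (- / s0 * (s0 * M))) =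
              T - M / s0 by field; lra.
    done. }
  have HPQ : frob P Q = T + be * M.
  { rewrite (frob_ext (P' := P) (Q' := madd P (mscale be W))) //.
    by rewrite frob_addr frob_scalr HPW. }
  have HQQ : frob Q Q = T + 2 * be * M + be * be * (s0 * M).
  { rewrite (frob_ext (P' := madd P (mscale be W)) (Q' := madd P (mscale be W))) //.
    rewrite frob_addl !frob_addr !frob_scall !frob_scalr (frob_sym W P) HPW HWW -/T.
    ring. }
  set x := M / s0.
  set y := T - x.
  have Hx : 0 <= x by rewrite /x; apply: Rmult_le_pos => //; left; apply: Rinv_0_lt_compat.
  have HPQ' : frob P Q = y + b * x.
  { rewrite HPQ /y /x /be; field; lra. }
  have HQQ' : frob Q Q = y + b ^ 2 * x.
  { rewrite HQQ /y /x /be; field; lra. }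
  set al := 1 - ((b - 1) / (b + 1)) ^ 2.
  have Hal : al = 4 * b / (b + 1) ^ 2 by rewrite /al; field; lra.
  have Hal0 : 0 <= al.
  { rewrite Hal; apply: Rmult_le_pos; first lra.
    left; apply: Rinv_0_lt_compat; nra. }
  have F1 : sqrt al * mnorm P * mnorm Q <= frob P Q.
  { have HaT : 0 <= al * T by apply: Rmult_le_pos.
    rewrite /mnorm -/T -(sqrt_mult_alt _ _ Hal0) -(sqrt_mult_alt _ _ HaT).
    have Hy : 0 <= y by exact HZ.
    have Hbx : 0 <= b * x by apply: Rmult_le_pos; lra.
    have Hpos : 0 <= frob P Q by rewrite HPQ'; lra.
    have -> : frob P Q = sqrt (frob P Q * frob P Q) by rewrite sqrt_square.
    apply: sqrt_le_1_alt.
    rewrite HPQ' HQQ' /T.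
    have E : (y + b * x) * (y + b * x) - al * (x + y) * (y + b ^ 2 * x) =
             ((b - 1) * (b * x - y)) ^ 2 / (b + 1) ^ 2.
    { rewrite Hal; field; lra. }
    have : 0 <= ((b - 1) * (b * x - y)) ^ 2 / (b + 1) ^ 2.
    { apply: Rmult_le_pos; first exact: pow2_ge_0.
      left; apply: Rinv_0_lt_compat; nra. }
    move=> H0. have hT : frob P P = x + y by rewrite /y /T; ring.
    rewrite hT. lra. }
  set ka := lam / Lam ^ 2.
  set R := madd (mscale ka (mulA A P)) (mscale (-1) P).
  have HLam : 0 < Lam by lra.
  have Hnu : lam / Lam <= 1.
  { have -> : lam / Lam = lam * / Lam by [].
    have HiL : 0 < / Lam by apply: Rinv_0_lt_compat.
    have -> : 1 = Lam * / Lam by field; lra.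
    apply: Rmult_le_compat_r; lra. }
  have Hnu0 : 0 <= lam / Lam.
  { apply: Rmult_le_pos; [lra | left; apply: Rinv_0_lt_compat; lra]. }
  have Hsn0 : 0 <= 1 - (lam / Lam) ^ 2 by nra.
  have F2 : frob R R <= (1 - (lam / Lam) ^ 2) * T.
  { rewrite /R frob_addl !frob_addr !frob_scall !frob_scalr (frob_sym P (mulA A P)) -/T.
    set U := frob (mulA A P) (mulA A P).
    set V := frob (mulA A P) P.
    have HU : U <= Lam ^ 2 * T.
    { have h := HA2 P. have h0 := mnorm_nonneg (mulA A P). have h1 := mnorm_nonneg P.
      rewrite /U -mnorm_sq /T -mnorm_sq. nra. }
    have HV : V >= lam * T by rewrite /V /T -mnorm_sq; exact: HA1.
    have Hka : 0 <= ka.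
    { rewrite /ka; apply: Rmult_le_pos; [lra | left; apply: Rinv_0_lt_compat; nra]. }
    have h1 : ka * ka * U <= ka * ka * (Lam ^ 2 * T).
    { apply: Rmult_le_compat_l => //; nra. }
    have h2 : ka * V >= ka * (lam * T) by nra.
    have e : ka * ka * (Lam ^ 2 * T) - 2 * (ka * (lam * T)) + T =
             (1 - (lam / Lam) ^ 2) * T by rewrite /ka; field; lra.
    nra. }
  have F2' : mnorm R <= sqrt (1 - (lam / Lam) ^ 2) * mnorm P.
  { rewrite /mnorm -sqrt_mult_alt //; exact: sqrt_le_1_alt. }
  have F3 := frob_cs R Q.
  have Hsplit : frob (mscale ka (mulA A P)) Q = frob P Q + frob R Q.
  { rewrite -frob_addl; apply: frob_ext => // a j; rewrite /madd /R /madd /mscale; ring. }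
  rewrite -/Q -/ka Hsplit -/al.
  have hQ := mnorm_nonneg Q.
  have hP := mnorm_nonneg P.
  have h4 : mnorm R * mnorm Q <= sqrt (1 - (lam / Lam) ^ 2) * mnorm P * mnorm Q.
  { apply: Rmult_le_compat_r => //. }
  nra.
Qed.
Unset Implicit Arguments.

Theorem lemma6p3 (N n : nat) (k k' : R -> R) (O : vec n -> Prop)
  (X : vec n -> vec N) (A : mat N N) (lam Lam : R) :
  (forall t, 0 < t -> 0 < k t) ->
  (forall t, 0 < t -> derivable_pt_lim k t (k' t)) ->
  (forall t, 0 < t -> continuity_pt k' t) ->
  is_open O ->
  (forall x, O x -> X x <> @vzero N) ->
  C1_on O X ->
  0 < lam -> lam <= Lam ->
  (forall chi : mat N n, frob (mulA A chi) chi >= lam * (mnorm chi) ^ 2) ->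
  (forall chi : mat N n, mnorm (mulA A chi) <= Lam * mnorm chi) ->
  forall (x : vec n) (DX DKX : mat N n),
    O x ->
    is_jacobian X x DX ->
    is_jacobian (fun y => Kmap k (X y)) x DKX ->
    0 < bfun k k' (vnorm (X x)) ->
    frob (mscale (lam / Lam ^ 2) (mulA A DX)) DKX >=
      (sqrt (1 - ((bfun k k' (vnorm (X x)) - 1) / (bfun k k' (vnorm (X x)) + 1)) ^ 2)
       - sqrt (1 - (lam / Lam) ^ 2)) * mnorm DX * mnorm DKX.
Proof.
  move=> Hk Hk' _ _ _ _ Hlam Hle HA1 HA2 x DX DKX _ HDX HDKX Hb.
  have Hshift : forall j, shift x j 0 = x.
  { move=> j; apply: functional_extensionality => i; rewrite /shift.
    case: (i == j); ring. }
  set s0 := fsum (fun c => X x c * X x c).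
  have Hr0 : 0 <= vnorm (X x) by exact: sqrt_pos.
  have Hrne : vnorm (X x) <> 0.
  { move=> h; move: Hb; rewrite /bfun h Rmult_0_r /Rdiv Rmult_0_l; lra. }
  have Hr : 0 < vnorm (X x) by lra.
  have Hs0 : 0 < s0.
  { case: (Rle_or_lt s0 0) => // h.
    exfalso; apply: Hrne; rewrite /vnorm -/s0; exact: sqrt_neg_0. }
  have Hkr := Hk _ Hr.
  set b := bfun k k' (vnorm (X x)) in Hb *.
  have HD : forall a j, DKX a j = k (vnorm (X x)) / vnorm (X x) *
      (DX a j + (b - 1) / s0 * X x a * fsum (fun c => X x c * DX c j)).
  { move=> a j.
    have H1 := HDKX a j.
    have Hs : derivable_pt_lim (fun t => fsum (fun c => X (shift x j t) c * X (shift x j t) c)) 0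
       (fsum (fun c => DX c j * X (shift x j 0) c + X (shift x j 0) c * DX c j)).
    { apply: (@lsum_deriv _ (enum 'I_N) (fun c t => X (shift x j t) c * X (shift x j t) c) (fun c => DX c j * X (shift x j 0) c + X (shift x j 0) c * DX c j)) => c.
      exact: (derivable_pt_lim_mult (fun t => X (shift x j t) c) (fun t => X (shift x j t) c)
                _ _ _ (HDX c j) (HDX c j)). }
    have Hpos0 : 0 < fsum (fun c => X (shift x j 0) c * X (shift x j 0) c) by rewrite Hshift.
    have Hkd : derivable_pt_lim k (sqrt (fsum (fun c => X (shift x j 0) c * X (shift x j 0) c)))
       (k' (sqrt (fsum (fun c => X (shift x j 0) c * X (shift x j 0) c)))).
    { rewrite Hshift; exact: Hk'. }
    have H2 := chain1 Hs (HDX a j) Hpos0 Hkd.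
    have E := uniqueness_limite (fun t => Kmap k (X (shift x j t)) a) 0 _ _ H1 H2.
    rewrite E Hshift.
    have -> : fsum (fun c => DX c j * X x c + X x c * DX c j) =
              2 * fsum (fun c => X x c * DX c j).
    { rewrite -fsum_scal; apply: fsum_ext => c; ring. }
    have Hss : s0 = vnorm (X x) * vnorm (X x) by rewrite /vnorm -/s0 sqrt_sqrt //; lra.
    rewrite -/s0 Hss /b /bfun sqrt_square //.
    rewrite /Rsqr; field; split; lra. }
  set c := k (vnorm (X x)) / vnorm (X x).
  have Hc : 0 < c by rewrite /c; apply: Rmult_lt_0_compat => //; apply: Rinv_0_lt_compat.
  set Q : mat N n := fun a j => DX a j + (b - 1) / s0 * X x a * fsum (fun c => X x c * DX c j).
  have EF : frob (mscale (lam / Lam ^ 2) (mulA A DX)) DKX =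
            c * frob (mscale (lam / Lam ^ 2) (mulA A DX)) Q.
  { rewrite -frob_scalr; apply: frob_ext => // a j. }
  have EN : mnorm DKX = c * mnorm Q.
  { rewrite /mnorm (frob_ext (P' := mscale c Q) (Q' := mscale c Q)) //.
    rewrite frob_scall frob_scalr -Rmult_assoc sqrt_mult_alt; last nra.
    by rewrite sqrt_square; lra. }
  have K := @key N n A DX (X x) lam Lam b Hlam Hle HA1 HA2 Hb Hs0.
  rewrite -/s0 -/Q in K.
  rewrite EF EN.
  have hP := mnorm_nonneg DX.
  have hQ := mnorm_nonneg Q.
  apply: Rle_ge.
  set sa := sqrt _; set sn := sqrt _.
  have -> : (sa - sn) * mnorm DX * (c * mnorm Q) = c * ((sa - sn) * mnorm DX * mnorm Q) by ring.
  apply: Rmult_le_compat_l; first lra. rewrite /sa /sn; apply: Rge_le; exact K.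
Qed.
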